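(* In the setting of the context (CFSR scheme: flux reconstruction with chain-rule flux derivatives), let $\mathcal{E}_j=(\Phi_{j+1/2}-\Phi_{j-1/2})/h$ evaluated on exact nodal values. If $\kappa_3=0$, then as $h\to0$ with derivatives at $x_j$, $$\mathcal{E}_j=\frac{\partial f}{\partial x}+\frac{3\theta-1}{12}\frac{\partial^3 f}{\partial x^3}h^2-\frac{\kappa-1}{8}\left[\frac{\partial D}{\partial x}\frac{\partial^3 u}{\partial x^3}+D(u(x_j))\frac{\partial^4 u}{\partial x^4}\right]h^3+O(h^4),$$ where $f$ denotes $f(u(x))$ and $\partial D/\partial x=\frac{d}{dx}D(u(x))$; thus $\theta=1/3$ gives third-order accuracy. Moreover, if $\theta=1/3$ and $\kappa_3=\kappa-1$, then $\mathcal{E}_j=\frac{\partial f}{\partial x}+O(h^4)$.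
   Context: Let $h>0$, uniform grid $x_i=ih$, $i\in\mathbb{Z}$. Let $u$ be a smooth real function of $x$, $u_i=u(x_i)$; let $f$ (flux) and $D$ (dissipation coefficient) be smooth real functions of one variable; $f_i=f(u_i)$. Define successive central differences $(u_x)_i=(u_{i+1}-u_{i-1})/(2h)$, $(u_{xx})_i=((u_x)_{i+1}-(u_x)_{i-1})/(2h)$. For the face $i+1/2$ with $j=i$, $k=i+1$, let $T_j=\frac h4((u_x)_k-(u_x)_j)-\frac{h^2}{4}(u_{xx})_j$, $T_k=\frac h4((u_x)_k-(u_x)_j)-\frac{h^2}{4}(u_{xx})_k$, and reconstructed states (parameters $\kappa,\kappa_3$) $u_L=\kappa\frac{u_j+u_k}{2}+(1-\kappa)[u_j+\frac h2(u_x)_j]+\kappa_3T_j$, $u_R=\kappa\frac{u_j+u_k}{2}+(1-\kappa)[u_k-\frac h2(u_x)_k]+\kappa_3T_k$. Reconstructed fluxes with parameter $\theta$ and chain-rule derivatives: $f_L=\theta\frac{f_j+f_k}{2}+(1-\theta)[f_j+f'(u_j)\frac h2(u_x)_j]$, $f_R=\theta\frac{f_j+f_k}{2}+(1-\theta)[f_k-f'(u_k)\frac h2(u_x)_k]$. Numerical flux: $\Phi_{i+1/2}=\frac12(f_L+f_R)-\frac12D_{i+1/2}(u_R-u_L)$, with $D_{i+1/2}=\bar D(u_i,u_{i+1})$ for a smooth symmetric $\bar D$ with $\bar D(v,v)=D(v)$. *)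

(* Defs.v *)
From Stdlib Require Import Reals ZArith.
From Coquelicot Require Import Coquelicot.
Open Scope R_scope.

Definition smooth1 (g : R -> R) : Prop :=
  forall (n : nat) (x : R), ex_derive (Derive_n g n) x.

Definition smooth2 (F : R -> R -> R) : Prop :=
  exists pd : nat -> nat -> R -> R -> R,
    pd 0%nat 0%nat = F /\
    forall (m n : nat) (x y : R),
      is_derive (fun t => pd m n t y) x (pd (S m) n x y) /\
      is_derive (fun t => pd m n x t) y (pd m (S n) x y) /\
      continuous (fun p : R * R => pd m n (fst p) (snd p)) (x, y).

Definition ux (uv : Z -> R) (h : R) (i : Z) : R :=
  (uv (i + 1)%Z - uv (i - 1)%Z) / (2 * h).
Definition uxx (uv : Z -> R) (h : R) (i : Z) : R :=
  (ux uv h (i + 1)%Z - ux uv h (i - 1)%Z) / (2 * h).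

(* CFSR numerical flux at face i+1/2 (j = i, k = i+1) *)
Definition cfsr_flux (f D : R -> R) (Dbar : R -> R -> R)
    (kappa kappa3 theta h : R) (uv : Z -> R) (i : Z) : R :=
  let j := i in let k := (i + 1)%Z in
  let Tj := h / 4 * (ux uv h k - ux uv h j) - h ^ 2 / 4 * uxx uv h j in
  let Tk := h / 4 * (ux uv h k - ux uv h j) - h ^ 2 / 4 * uxx uv h k in
  let uL := kappa * ((uv j + uv k) / 2)
            + (1 - kappa) * (uv j + h / 2 * ux uv h j) + kappa3 * Tj in
  let uR := kappa * ((uv j + uv k) / 2)
            + (1 - kappa) * (uv k - h / 2 * ux uv h k) + kappa3 * Tk in
  let fL := theta * ((f (uv j) + f (uv k)) / 2)
            + (1 - theta) * (f (uv j) + Derive f (uv j) * (h / 2) * ux uv h j) in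
  let fR := theta * ((f (uv j) + f (uv k)) / 2)
            + (1 - theta) * (f (uv k) - Derive f (uv k) * (h / 2) * ux uv h k) in
  (fL + fR) / 2 - Dbar (uv j) (uv k) * (uR - uL) / 2.

Definition cfsr_E (f D : R -> R) (Dbar : R -> R -> R)
    (kappa kappa3 theta : R) (u : R -> R) (h : R) (j : Z) : R :=
  let uv := fun i : Z => u (IZR i * h) in
  (cfsr_flux f D Dbar kappa kappa3 theta h uv j
   - cfsr_flux f D Dbar kappa kappa3 theta h uv (j - 1)%Z) / h.

(* Main.v *)
Require Import Defs.
From Stdlib Require Import Reals ZArith Lra Lia FunctionalExtensionality.
From Coquelicot Require Import Coquelicot.
Open Scope R_scope.

Definition Cn (n : nat) (g : R -> R) : Prop :=
  forall k x, (k <= n)%nat -> ex_derive (Derive_n g k) x.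

Lemma Dn_S (g : R -> R) (k : nat) : Derive_n g (S k) = Derive_n (Derive g) k.
Proof.
  apply functional_extensionality; intro x.
  replace (S k) with (k+1)%nat by lia. rewrite <- (Derive_n_comp g k 1). reflexivity.
Qed.

Lemma Cn_S n g : (forall x, ex_derive g x) -> Cn n (Derive g) -> Cn (S n) g.
Proof.
  intros H0 H k x Hk. destruct k as [|k].
  - apply H0.
  - rewrite Dn_S. apply H. lia.
Qed.

Lemma Cn_S_inv n g : Cn (S n) g -> (forall x, ex_derive g x) /\ Cn n (Derive g).
Proof.
  intros H. split.
  - intro x. apply (H 0%nat x). lia.
  - intros k x Hk. rewrite <- Dn_S. apply H. lia.
Qed.

Lemma Cn_weak n g : Cn (S n) g -> Cn n g.
Proof. intros H k x Hk. apply H. lia. Qed.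

Lemma Cn_0 g : Cn 0 g <-> forall x, ex_derive g x.
Proof.
  split; intros H.
  - intro x. apply (H 0%nat x). lia.
  - intros k x Hk. assert (k = 0%nat) by lia. subst. apply H.
Qed.

Lemma smooth_Cn g : smooth1 g <-> forall n, Cn n g.
Proof.
  split; intros H.
  - intros n k x _. apply H.
  - intros n x. apply (H n n x). lia.
Qed.

Lemma Cn_plus n : forall a b, Cn n a -> Cn n b -> Cn n (fun x => a x + b x).
Proof.
  induction n as [|n IH]; intros a b Ha Hb.
  - apply Cn_0. intro x. apply (ex_derive_plus a b x); [apply (proj1 (Cn_0 a) Ha) | apply (proj1 (Cn_0 b) Hb)].
  - apply Cn_S_inv in Ha as [Ha0 Ha1]. apply Cn_S_inv in Hb as [Hb0 Hb1].
    apply Cn_S.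
    + intro x. apply (ex_derive_plus a b x); [apply Ha0 | apply Hb0].
    + replace (Derive (fun x => a x + b x)) with (fun x => Derive a x + Derive b x).
      * apply IH; auto.
      * apply functional_extensionality; intro x. rewrite Derive_plus; [reflexivity | apply Ha0 | apply Hb0].
Qed.

Lemma Cn_mult n : forall a b, Cn n a -> Cn n b -> Cn n (fun x => a x * b x).
Proof.
  induction n as [|n IH]; intros a b Ha Hb.
  - apply Cn_0. intro x. apply (ex_derive_mult a b x); [apply (proj1 (Cn_0 a) Ha) | apply (proj1 (Cn_0 b) Hb)].
  - pose proof (Cn_weak _ _ Ha) as Ha'. pose proof (Cn_weak _ _ Hb) as Hb'.
    apply Cn_S_inv in Ha as [Ha0 Ha1]. apply Cn_S_inv in Hb as [Hb0 Hb1].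
    apply Cn_S.
    + intro x. apply (ex_derive_mult a b x); [apply Ha0 | apply Hb0].
    + replace (Derive (fun x => a x * b x)) with (fun x => Derive a x * b x + a x * Derive b x).
      * apply Cn_plus; apply IH; auto.
      * apply functional_extensionality; intro x. rewrite Derive_mult; [reflexivity | apply Ha0 | apply Hb0].
Qed.

Lemma smooth_Derive a : smooth1 a -> smooth1 (Derive a).
Proof.
  intros H n x. rewrite <- Dn_S. apply H.
Qed.

Lemma Cn_comp n : forall a b, smooth1 a -> smooth1 b -> Cn n (fun x => a (b x)).
Proof.
  induction n as [|n IH]; intros a b Ha Hb.
  - apply Cn_0. intro x. apply ex_derive_comp; [apply (Ha 0%nat) | apply (Hb 0%nat)].
  - apply Cn_S.
    + intro x. apply ex_derive_comp; [apply (Ha 0%nat) | apply (Hb 0%nat)].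
    + replace (Derive (fun x => a (b x))) with (fun x => Derive a (b x) * Derive b x).
      * apply Cn_mult.
        -- apply IH; auto. apply smooth_Derive; auto.
        -- apply smooth_Cn. apply smooth_Derive; auto.
      * apply functional_extensionality; intro x. rewrite (Derive_comp a b x).
        ring. apply (Ha 0%nat). apply (Hb 0%nat).
Qed.

Lemma smooth_comp a b : smooth1 a -> smooth1 b -> smooth1 (fun x => a (b x)).
Proof. intros Ha Hb. apply smooth_Cn. intro n. apply Cn_comp; auto. Qed.


Lemma cont_bound (g : R -> R) (L : R) :
  (forall x, continuous g x) -> exists B, 0 <= B /\ forall y, Rabs y <= L -> Rabs (g y) <= B.
Proof.
  intros Hc. destruct (bounded_continuity g (-L) L) as [B HB].
  { intros x _. apply Hc. }
  exists (Rmax B 0). split. apply Rmax_r.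
  intros y Hy. apply Rabs_le_between in Hy.
  pose proof (HB y Hy) as H. change (norm (g y)) with (Rabs (g y)) in H.
  pose proof (Rmax_l B 0). lra.
Qed.

Lemma smooth_cont g k : smooth1 g -> forall x, continuous (Derive_n g k) x.
Proof. intros H x. exact (ex_derive_continuous (Derive_n g k) x (H k x)). Qed.

Lemma sum_t0 g y N :
  sum_f_R0 (fun m => 0 ^ m / INR (fact m) * Derive_n g m y) N = g y.
Proof.
  induction N as [|N IH].
  - simpl. field.
  - simpl sum_f_R0. rewrite IH. replace (0 ^ S N) with 0 by (simpl; ring). unfold Rdiv. ring.
Qed.

Lemma taylor_unif g N L : smooth1 g -> exists C, 0 <= C /\ forall y t, Rabs y <= L -> Rabs t <= 1 ->
  Rabs (g (y + t) - sum_f_R0 (fun m => t ^ m / INR (fact m) * Derive_n g m y) N)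
  <= C * Rabs t ^ (S N).
Proof.
  intros Hg.
  destruct (cont_bound (Derive_n g (S N)) (L + 1)) as [B [HB0 HB]].
  { apply smooth_cont; auto. }
  assert (Hf : 0 < INR (fact (S N))) by (apply lt_0_INR; apply lt_O_fact).
  exists (B / INR (fact (S N))). split.
  { apply Rdiv_le_0_compat; lra. }
  intros y t Hy Ht.
  assert (Hexn : forall f, smooth1 f -> forall t k, ex_derive_n f k t).
  { intros f Hf' t0 k. destruct k; simpl; [exact I | apply Hf']. }
  destruct (Rtotal_order t 0) as [Hneg | [H0 | Hpos]].
  -
    set (k := fun s => g (- s)).
    assert (Hk : forall m z, Derive_n k m z = (-1) ^ m * Derive_n g m (- z)).
    { intros m z. unfold k. apply Derive_n_comp_opp. apply filter_forall.
      intros w j _. apply Hexn; auto. }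
    assert (Hsk : forall t0 j, ex_derive_n k j t0).
    { intros t0 j. unfold k. apply ex_derive_n_comp_opp. apply filter_forall.
      intros w i _. apply Hexn; auto. }
    destruct (Taylor_Lagrange k N (- y) (- y - t)) as [z [Hz Heq]].
    { lra. }
    { intros; apply Hsk. }
    replace (g (y + t)) with (k (- y - t)) by (unfold k; f_equal; ring).
    rewrite Heq.
    replace (sum_f_R0 (fun m : nat => (- y - t - - y) ^ m / INR (fact m) * Derive_n k m (- y)) N)
      with (sum_f_R0 (fun m => t ^ m / INR (fact m) * Derive_n g m y) N).
    2:{ apply sum_eq. intros i _. rewrite Hk. replace (- - y) with y by ring.
        replace (- y - t - - y) with ((-1) * t) by ring. rewrite Rpow_mult_distr.
        assert (Hsq : (-1) ^ i * (-1) ^ i = 1).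
        { rewrite <- Rpow_mult_distr. replace (-1 * -1) with 1 by ring. apply pow1. }
        transitivity (((-1) ^ i * (-1) ^ i) * (t ^ i / INR (fact i) * Derive_n g i y)).
        rewrite Hsq; ring. unfold Rdiv; ring. }
    replace (sum_f_R0 (fun m : nat => t ^ m / INR (fact m) * Derive_n g m y) N +
      (- y - t - - y) ^ S N / INR (fact (S N)) * Derive_n k (S N) z -
      sum_f_R0 (fun m : nat => t ^ m / INR (fact m) * Derive_n g m y) N)
      with ((- y - t - - y) ^ S N / INR (fact (S N)) * Derive_n k (S N) z) by ring.
    rewrite Hk. rewrite !Rabs_mult. rewrite Rabs_div by lra.
    rewrite (Rabs_right (INR _)) by lra.
    replace (- y - t - - y) with (- t) by ring. rewrite <- RPow_abs. rewrite Rabs_Ropp.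
    rewrite pow_1_abs, Rmult_1_l.
    assert (Hz' : Rabs (- z) <= L + 1).
    { apply Rabs_le_between in Hy. apply Rabs_le_between in Ht. apply Rabs_le_between. lra. }
    pose proof (HB _ Hz').
    assert (0 <= Rabs t ^ S N) by (apply pow_le; apply Rabs_pos).
    unfold Rdiv.
    assert (0 <= / INR (fact (S N))) by (apply Rlt_le, Rinv_0_lt_compat; lra).
    replace (B * / INR (fact (S N)) * Rabs t ^ S N) with (Rabs t ^ S N * / INR (fact (S N)) * B) by ring.
    apply Rmult_le_compat_l; [apply Rmult_le_pos; auto | auto].
  - subst t. rewrite Rplus_0_r, sum_t0. rewrite Rminus_diag, Rabs_R0.
    simpl. lra.
  - destruct (Taylor_Lagrange g N y (y + t)) as [z [Hz Heq]].
    { lra. }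
    { intros; apply Hexn; auto. }
    rewrite Heq. replace (y + t - y) with t by ring.
    replace (sum_f_R0 (fun m : nat => t ^ m / INR (fact m) * Derive_n g m y) N +
      t ^ S N / INR (fact (S N)) * Derive_n g (S N) z -
      sum_f_R0 (fun m : nat => t ^ m / INR (fact m) * Derive_n g m y) N)
      with (t ^ S N / INR (fact (S N)) * Derive_n g (S N) z) by ring.
    rewrite !Rabs_mult. rewrite Rabs_div by lra.
    rewrite (Rabs_right (INR _)) by lra. rewrite <- RPow_abs.
    assert (Hz' : Rabs z <= L + 1).
    { apply Rabs_le_between in Hy. apply Rabs_le_between in Ht. apply Rabs_le_between. lra. }
    pose proof (HB _ Hz').
    assert (0 <= Rabs t ^ S N) by (apply pow_le; apply Rabs_pos).
    unfold Rdiv.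
    assert (0 <= / INR (fact (S N))) by (apply Rlt_le, Rinv_0_lt_compat; lra).
    replace (B * / INR (fact (S N)) * Rabs t ^ S N) with (Rabs t ^ S N * / INR (fact (S N)) * B) by ring.
    apply Rmult_le_compat_l; [apply Rmult_le_pos; auto | auto].
Qed.


Definition Bnd (g : R -> R -> R) (k : nat) : Prop :=
  forall M, 0 < M -> exists C delta, 0 < delta /\
    forall x h, Rabs x <= M -> 0 < h < delta -> Rabs (g x h) <= C * h ^ k.

Lemma Bnd_ext g1 g2 k : (forall x h, 0 < h -> g1 x h = g2 x h) -> Bnd g1 k -> Bnd g2 k.
Proof.
  intros He H M HM. destruct (H M HM) as [C [d [Hd HC]]]. exists C, d. split; auto.
  intros x h Hx Hh. rewrite <- He by lra. auto.
Qed.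

Lemma Bnd_plus g1 g2 k : Bnd g1 k -> Bnd g2 k -> Bnd (fun x h => g1 x h + g2 x h) k.
Proof.
  intros H1 H2 M HM. destruct (H1 M HM) as [C1 [d1 [Hd1 HC1]]].
  destruct (H2 M HM) as [C2 [d2 [Hd2 HC2]]].
  exists (C1 + C2), (Rmin d1 d2). split. apply Rmin_pos; auto.
  intros x h Hx Hh. pose proof (Rmin_l d1 d2). pose proof (Rmin_r d1 d2).
  eapply Rle_trans. apply Rabs_triang.
  specialize (HC1 x h Hx ltac:(lra)). specialize (HC2 x h Hx ltac:(lra)). lra.
Qed.

Lemma Bnd_scal c g k : Bnd g k -> Bnd (fun x h => c * g x h) k.
Proof.
  intros H M HM. destruct (H M HM) as [C [d [Hd HC]]].
  exists (Rabs c * C), d. split; auto. intros x h Hx Hh.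
  rewrite Rabs_mult, Rmult_assoc. apply Rmult_le_compat_l. apply Rabs_pos. auto.
Qed.

Lemma Bnd_opp g k : Bnd g k -> Bnd (fun x h => - g x h) k.
Proof.
  intros H. apply (Bnd_ext (fun x h => (-1) * g x h)). intros; ring. apply Bnd_scal; auto.
Qed.

Lemma Bnd_minus g1 g2 k : Bnd g1 k -> Bnd g2 k -> Bnd (fun x h => g1 x h - g2 x h) k.
Proof. intros. apply Bnd_plus; auto. apply Bnd_opp; auto. Qed.

Lemma Bnd_mult g1 g2 k1 k2 : Bnd g1 k1 -> Bnd g2 k2 -> Bnd (fun x h => g1 x h * g2 x h) (k1 + k2).
Proof.
  intros H1 H2 M HM. destruct (H1 M HM) as [C1 [d1 [Hd1 HC1]]].
  destruct (H2 M HM) as [C2 [d2 [Hd2 HC2]]].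
  exists (C1 * C2), (Rmin d1 d2). split. apply Rmin_pos; auto.
  intros x h Hx Hh. pose proof (Rmin_l d1 d2). pose proof (Rmin_r d1 d2).
  specialize (HC1 x h Hx ltac:(lra)). specialize (HC2 x h Hx ltac:(lra)).
  rewrite Rabs_mult, pow_add.
  replace (C1 * C2 * (h ^ k1 * h ^ k2)) with ((C1 * h ^ k1) * (C2 * h ^ k2)) by ring.
  apply Rmult_le_compat; auto; apply Rabs_pos.
Qed.

Lemma Bnd_weak g k k' : (k <= k')%nat -> Bnd g k' -> Bnd g k.
Proof.
  intros Hk H M HM. destruct (H M HM) as [C [d [Hd HC]]].
  exists (Rmax C 0), (Rmin d 1). split. apply Rmin_pos; lra.
  intros x h Hx Hh. pose proof (Rmin_l d 1). pose proof (Rmin_r d 1).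
  specialize (HC x h Hx ltac:(lra)).
  assert (h ^ k' <= h ^ k).
  { replace k' with (k + (k' - k))%nat by lia. rewrite pow_add.
    assert (0 <= h ^ k) by (apply pow_le; lra).
    assert (h ^ (k' - k) <= 1) by (rewrite <- (pow1 (k' - k)); apply pow_incr; lra).
    assert (0 <= h ^ (k' - k)) by (apply pow_le; lra). nra. }
  assert (0 <= h ^ k') by (apply pow_le; lra).
  pose proof (Rmax_l C 0). pose proof (Rmax_r C 0).
  apply Rle_trans with (C * h ^ k'); auto.
  apply Rle_trans with (Rmax C 0 * h ^ k'). apply Rmult_le_compat_r; auto.
  apply Rmult_le_compat_l; auto.
Qed.

Lemma Bnd_hpow k : Bnd (fun x h => h ^ k) k.
Proof.
  intros M HM. exists 1, 1. split. lra. intros x h Hx Hh.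
  rewrite Rabs_right. lra. apply Rle_ge, pow_le; lra.
Qed.

Lemma Bnd_fx (c : R -> R) : (forall L, exists B, forall y, Rabs y <= L -> Rabs (c y) <= B) ->
  Bnd (fun x h => c x) 0.
Proof.
  intros H M HM. destruct (H M) as [B HB]. exists B, 1. split. lra.
  intros x h Hx Hh. simpl. rewrite Rmult_1_r. auto.
Qed.

Lemma Bnd_cont (c : R -> R) : (forall x, continuous c x) -> Bnd (fun x h => c x) 0.
Proof.
  intros H. apply Bnd_fx. intros L. destruct (cont_bound c L H) as [B [_ HB]]. eauto.
Qed.

Lemma Bnd_const c : Bnd (fun x h => c) 0.
Proof. apply (Bnd_fx (fun _ => c)). intros L. exists (Rabs c). intros; lra. Qed.

Lemma Bnd_h : Bnd (fun x h => h) 0.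
Proof. apply (Bnd_weak _ 0 1). lia. apply (Bnd_ext (fun x h => h ^ 1)). intros; ring. apply Bnd_hpow. Qed.

Lemma Bnd_divh g k : Bnd g (S k) -> Bnd (fun x h => g x h / h) k.
Proof.
  intros H M HM. destruct (H M HM) as [C [d [Hd HC]]].
  exists C, d. split; auto. intros x h Hx Hh.
  specialize (HC x h Hx Hh). unfold Rdiv. rewrite Rabs_mult.
  rewrite Rabs_inv, (Rabs_right h) by lra.
  simpl in HC. apply Rmult_le_reg_r with h. lra.
  rewrite Rmult_assoc, Rinv_l by lra. lra.
Qed.

Lemma Bnd_mult_h g k : Bnd g k -> Bnd (fun x h => h * g x h) (S k).
Proof.
  intros H. apply (Bnd_ext (fun x h => (h ^ 1) * g x h)). intros; ring.
  apply (Bnd_mult _ _ 1 k). apply Bnd_hpow. auto.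
Qed.

Lemma Bnd_taylor g N (a : R) : smooth1 g ->
  Bnd (fun x h => g (x + a * h) - sum_f_R0 (fun m => (a * h) ^ m / INR (fact m) * Derive_n g m x) N) (S N).
Proof.
  intros Hg M HM. destruct (taylor_unif g N M Hg) as [C [HC0 HC]].
  exists (C * Rabs a ^ S N), (/ (Rabs a + 1)). split.
  { apply Rinv_0_lt_compat. pose proof (Rabs_pos a). lra. }
  intros x h Hx Hh.
  assert (Hah : Rabs (a * h) <= 1).
  { rewrite Rabs_mult, (Rabs_right h) by lra. pose proof (Rabs_pos a).
    destruct Hh as [Hh1 Hh2].
    apply Rmult_lt_compat_l with (r := Rabs a + 1) in Hh2; [|lra].
    rewrite Rinv_r in Hh2 by lra. nra. }
  eapply Rle_trans. apply HC; auto.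
  rewrite Rabs_mult, (Rabs_right h) by lra. rewrite Rpow_mult_distr. lra.
Qed.


Lemma bound_2d (P : R -> R -> R) :
  (forall x y, continuous (fun p : R * R => P (fst p) (snd p)) (x, y)) ->
  forall R0, 0 < R0 -> exists K, forall a b, Rabs a <= R0 -> Rabs b <= R0 -> Rabs (P a b) <= K.
Proof.
  intros Hc R0 HR0.
  destruct (uniform_continuity_2d P (- R0) R0 (- R0) R0) with (eps := mkposreal 1 Rlt_0_1)
    as [delta Hd].
  { intros x y _ _. apply continuity_2d_pt_filterlim. apply Hc. }
  destruct (INR_unbounded (R0 / delta)) as [N HN].
  assert (Hdpos : 0 < delta) by apply cond_pos.
  assert (HNpos : 0 < INR N).
  { apply Rle_lt_trans with (R0 / delta); [|lra]. apply Rlt_le. apply Rdiv_lt_0_compat; lra. }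
  assert (HRN : R0 / INR N < delta).
  { apply Rmult_lt_reg_r with (INR N). auto. unfold Rdiv. rewrite Rmult_assoc, Rinv_l by lra.
    apply Rmult_lt_reg_l with (/ delta). apply Rinv_0_lt_compat; lra.
    replace (/ delta * (delta * INR N)) with (INR N) by (field; lra).
    unfold Rdiv in HN. lra. }
  exists (Rabs (P 0 0) + INR N). intros a b Ha Hb.
  assert (Hk : forall k, (k <= N)%nat ->
    Rabs (P (INR k * a / INR N) (INR k * b / INR N)) <= Rabs (P 0 0) + INR k).
  { induction k as [|k IH]; intros Hk.
    - simpl. replace (0 * a / INR N) with 0 by (field; lra).
      replace (0 * b / INR N) with 0 by (field; lra). lra.
    - specialize (IH ltac:(lia)).
      assert (HkN : INR k <= INR N) by (apply le_INR; lia).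
      assert (HSkN : INR (S k) <= INR N) by (apply le_INR; lia).
      assert (Hk0 : 0 <= INR k) by apply pos_INR.
      assert (Hin : forall j c, 0 <= INR j <= INR N -> Rabs c <= R0 -> - R0 <= INR j * c / INR N <= R0).
      { intros j c Hj Hc0. apply Rabs_le_between. unfold Rdiv.
        rewrite !Rabs_mult, Rabs_inv, (Rabs_right (INR j)), (Rabs_right (INR N)) by lra.
        apply Rmult_le_reg_r with (INR N); auto.
        rewrite Rmult_assoc, Rinv_l by lra. nra. }
      assert (Hstep : forall c, Rabs c <= R0 -> Rabs (INR (S k) * c / INR N - INR k * c / INR N) < delta).
      { intros c Hc0. rewrite S_INR.
        replace ((INR k + 1) * c / INR N - INR k * c / INR N) with (c / INR N) by (field; lra).
        unfold Rdiv. rewrite Rabs_mult, Rabs_inv, (Rabs_right (INR N)) by lra.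
        apply Rle_lt_trans with (R0 / INR N); auto. unfold Rdiv.
        apply Rmult_le_compat_r; auto. apply Rlt_le, Rinv_0_lt_compat; lra. }
      pose proof (Hd (INR k * a / INR N) (INR k * b / INR N) (INR (S k) * a / INR N) (INR (S k) * b / INR N)
        (Hin k a ltac:(lra) Ha) (Hin k b ltac:(lra) Hb)
        (Hin (S k) a ltac:(pose proof (pos_INR (S k)); lra) Ha)
        (Hin (S k) b ltac:(pose proof (pos_INR (S k)); lra) Hb) (Hstep a Ha) (Hstep b Hb)) as Hst.
      change (pos (mkposreal 1 Rlt_0_1)) with 1 in Hst. rewrite S_INR in *.
      pose proof (Rabs_triang_inv (P ((INR k + 1) * a / INR N) ((INR k + 1) * b / INR N))
        (P (INR k * a / INR N) (INR k * b / INR N))). lra. }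
  specialize (Hk N (le_n N)).
  replace (INR N * a / INR N) with a in Hk by (field; lra).
  replace (INR N * b / INR N) with b in Hk by (field; lra). auto.
Qed.

Lemma is_derive_lin c t : is_derive (fun s => c * s) t c.
Proof. auto_derive; [exact I | ring]. Qed.

Definition pd_ok (pd : nat -> nat -> R -> R -> R) : Prop :=
  forall (m n : nat) (x y : R),
      is_derive (fun t => pd m n t y) x (pd (S m) n x y) /\
      is_derive (fun t => pd m n x t) y (pd m (S n) x y) /\
      continuous (fun p : R * R => pd m n (fst p) (snd p)) (x, y).

Lemma quad2 pd (Hpd : pd_ok pd) a b K :
  (forall t, Rabs (t - a) <= Rabs (b - a) -> Rabs (pd 0%nat 2%nat a t) <= K) ->
  Rabs (pd 0%nat 0%nat a b - pd 0%nat 0%nat a a - pd 0%nat 1%nat a a * (b - a)) <= K * (b - a) ^ 2.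
Proof.
  intros HK.
  assert (H1 : forall t, Rabs (t - a) <= Rabs (b - a) ->
     Rabs (pd 0%nat 1%nat a t - pd 0%nat 1%nat a a) <= K * Rabs (b - a)).
  { intros t Ht. eapply Rle_trans.
    apply (bounded_variation (fun s => pd 0%nat 1%nat a s) (fun s => pd 0%nat 2%nat a s) K a t).
    intros s Hs. split. apply (Hpd 0%nat 1%nat a s). apply HK. lra.
    apply Rmult_le_compat_l; auto.
    pose proof (Rabs_pos (pd 0%nat 2%nat a a)). pose proof (HK a ltac:(rewrite Rminus_diag, Rabs_R0; apply Rabs_pos)). lra. }
  pose proof (bounded_variation (fun s => pd 0%nat 0%nat a s - pd 0%nat 1%nat a a * s)
     (fun s => pd 0%nat 1%nat a s - pd 0%nat 1%nat a a) (K * Rabs (b - a)) a b) as Hb.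
  assert (Hb' : Rabs ((pd 0%nat 0%nat a b - pd 0%nat 1%nat a a * b) - (pd 0%nat 0%nat a a - pd 0%nat 1%nat a a * a))
     <= K * Rabs (b - a) * Rabs (b - a)).
  { apply Hb. intros t Ht. split; [|apply H1; auto].
    apply (is_derive_minus (fun s => pd 0%nat 0%nat a s) (fun s => pd 0%nat 1%nat a a * s)).
    apply (Hpd 0%nat 0%nat a t).
    apply is_derive_lin. }
  replace (pd 0%nat 0%nat a b - pd 0%nat 0%nat a a - pd 0%nat 1%nat a a * (b - a))
    with ((pd 0%nat 0%nat a b - pd 0%nat 1%nat a a * b) - (pd 0%nat 0%nat a a - pd 0%nat 1%nat a a * a)) by ring.
  eapply Rle_trans. apply Hb'. rewrite Rmult_assoc, <- Rabs_mult.
  rewrite Rabs_right. right; ring. apply Rle_ge. replace ((b - a) * (b - a)) with ((b-a)^2) by ring. apply pow2_ge_0.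
Qed.

Lemma D_deriv pd (Hpd : pd_ok pd) (Dbar : R -> R -> R) (D : R -> R) :
  pd 0%nat 0%nat = Dbar -> (forall v w, Dbar v w = Dbar w v) -> (forall v, Dbar v v = D v) ->
  forall v, Derive D v = 2 * pd 0%nat 1%nat v v.
Proof.
  intros H00 Hsym HD v.
  assert (HDe : D = fun t => pd 0%nat 0%nat t t).
  { apply functional_extensionality; intro t. rewrite H00, HD. auto. }
  apply is_derive_unique. rewrite HDe.
  apply is_derive_Reals. intros eps Heps.
  pose proof (proj2 (proj2 (Hpd 0%nat 1%nat v v))) as Hc.
  apply continuity_2d_pt_filterlim in Hc.
  destruct (Hc (mkposreal (eps / 4) ltac:(lra))) as [d Hd]. simpl in Hd.
  exists d. intros h Hh0 Hh.
  assert (Hbv : forall a, Rabs (a - v) < d ->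
     Rabs ((pd 0%nat 0%nat a (v + h) - pd 0%nat 1%nat v v * (v + h)) - (pd 0%nat 0%nat a v - pd 0%nat 1%nat v v * v))
     <= eps / 4 * Rabs (v + h - v)).
  { intros a Ha.
    apply (bounded_variation (fun s => pd 0%nat 0%nat a s - pd 0%nat 1%nat v v * s)
       (fun s => pd 0%nat 1%nat a s - pd 0%nat 1%nat v v)).
    intros t Ht. split.
    - apply (is_derive_minus (fun s => pd 0%nat 0%nat a s) (fun s => pd 0%nat 1%nat v v * s)).
      apply (Hpd 0%nat 0%nat a t).
      apply is_derive_lin.
    - apply Rlt_le. apply Hd; auto. replace (v + h - v) with h in Ht by ring. lra. }
  pose proof (Hbv v ltac:(rewrite Rminus_diag, Rabs_R0; apply cond_pos)) as B1.
  pose proof (Hbv (v + h) ltac:(replace (v + h - v) with h by ring; auto)) as B2.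
  replace (v + h - v) with h in B1, B2 by ring.
  assert (Hs : pd 0%nat 0%nat (v + h) v = pd 0%nat 0%nat v (v + h)) by (rewrite H00; apply Hsym).
  replace ((pd 0%nat 0%nat (v + h) (v + h) - pd 0%nat 0%nat v v) / h - 2 * pd 0%nat 1%nat v v)
    with ((((pd 0%nat 0%nat (v + h) (v + h) - pd 0%nat 1%nat v v * (v + h)) - (pd 0%nat 0%nat (v + h) v - pd 0%nat 1%nat v v * v))
          + ((pd 0%nat 0%nat v (v + h) - pd 0%nat 1%nat v v * (v + h)) - (pd 0%nat 0%nat v v - pd 0%nat 1%nat v v * v))) / h)
    by (rewrite Hs; field; auto).
  unfold Rdiv. rewrite Rabs_mult, Rabs_inv.
  assert (0 < Rabs h) by (apply Rabs_pos_lt; auto).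
  apply Rmult_lt_reg_r with (Rabs h); auto. rewrite Rmult_assoc, Rinv_l by lra.
  rewrite Rmult_1_r. eapply Rle_lt_trans. apply Rabs_triang. nra.
Qed.


Definition Phi (f : R -> R) (Dbar : R -> R -> R) (kappa kappa3 theta h : R)
  (a b c d e g : R) : R :=
  let uxj := (d - b) / (2 * h) in
  let uxk := (e - c) / (2 * h) in
  let uxxj := ((e - c) / (2 * h) - (c - a) / (2 * h)) / (2 * h) in
  let uxxk := ((g - d) / (2 * h) - (d - b) / (2 * h)) / (2 * h) in
  let Tj := h / 4 * (uxk - uxj) - h ^ 2 / 4 * uxxj in
  let Tk := h / 4 * (uxk - uxj) - h ^ 2 / 4 * uxxk in
  let uL := kappa * ((c + d) / 2) + (1 - kappa) * (c + h / 2 * uxj) + kappa3 * Tj in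
  let uR := kappa * ((c + d) / 2) + (1 - kappa) * (d - h / 2 * uxk) + kappa3 * Tk in
  let fL := theta * ((f c + f d) / 2) + (1 - theta) * (f c + Derive f c * (h / 2) * uxj) in
  let fR := theta * ((f c + f d) / 2) + (1 - theta) * (f d - Derive f d * (h / 2) * uxk) in
  (fL + fR) / 2 - Dbar c d * (uR - uL) / 2.

Lemma flux_Phi f D Dbar kappa kappa3 theta h uv i :
  cfsr_flux f D Dbar kappa kappa3 theta h uv i =
  Phi f Dbar kappa kappa3 theta h (uv (i - 2)%Z) (uv (i - 1)%Z) (uv i) (uv (i + 1)%Z)
    (uv (i + 2)%Z) (uv (i + 3)%Z).
Proof.
  unfold cfsr_flux, Phi, uxx, ux. cbv zeta.
  replace (i + 1 + 1 + 1)%Z with (i + 3)%Z by ring.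
  replace (i + 1 + 1 - 1)%Z with (i + 1)%Z by ring.
  replace (i + 1 - 1 + 1)%Z with (i + 1)%Z by ring.
  replace (i + 1 - 1 - 1)%Z with (i - 1)%Z by ring.
  replace (i + 1 + 1)%Z with (i + 2)%Z by ring.
  replace (i + 1 - 1)%Z with i by ring.
  replace (i - 1 + 1)%Z with i by ring.
  replace (i - 1 - 1)%Z with (i - 2)%Z by ring.
  reflexivity.
Qed.

Definition Ew f Dbar kappa kappa3 theta (u : R -> R) x h : R :=
  (Phi f Dbar kappa kappa3 theta h (u (x + -2 * h)) (u (x + -1 * h)) (u (x + 0 * h))
      (u (x + 1 * h)) (u (x + 2 * h)) (u (x + 3 * h))
   - Phi f Dbar kappa kappa3 theta h (u (x + -3 * h)) (u (x + -2 * h)) (u (x + -1 * h))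
      (u (x + 0 * h)) (u (x + 1 * h)) (u (x + 2 * h))) / h.

Lemma cfsr_E_Ew f D Dbar kappa kappa3 theta u h j :
  cfsr_E f D Dbar kappa kappa3 theta u h j = Ew f Dbar kappa kappa3 theta u (IZR j * h) h.
Proof.
  unfold cfsr_E, Ew. rewrite !flux_Phi.
  assert (Hm : forall z (m : R), IZR z = IZR j + m -> u (IZR z * h) = u (IZR j * h + m * h)).
  { intros z m Hz. f_equal. rewrite Hz. ring. }
  rewrite (Hm (j - 2)%Z (-2)) by (rewrite minus_IZR; ring).
  rewrite (Hm (j - 1)%Z (-1)) by (rewrite minus_IZR; ring).
  rewrite (Hm j 0) by ring.
  rewrite (Hm (j + 1)%Z 1) by (rewrite plus_IZR; ring).
  rewrite (Hm (j + 2)%Z 2) by (rewrite plus_IZR; ring).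
  rewrite (Hm (j + 3)%Z 3) by (rewrite plus_IZR; ring).
  rewrite (Hm (j - 1 - 2)%Z (-3)) by (rewrite !minus_IZR; ring).
  rewrite (Hm (j - 1 - 1)%Z (-2)) by (rewrite !minus_IZR; ring).
  rewrite (Hm (j - 1 + 1)%Z 0) by (rewrite plus_IZR, minus_IZR; ring).
  rewrite (Hm (j - 1 + 2)%Z 1) by (rewrite plus_IZR, minus_IZR; ring).
  rewrite (Hm (j - 1 + 3)%Z 2) by (rewrite plus_IZR, minus_IZR; ring).
  reflexivity.
Qed.

Definition Wf kappa kappa3 (a b c d e g : R) : R :=
  (1 - kappa) * (d - c - (d - b) / 4 - (e - c) / 4)
  - kappa3 / 16 * (g - 2 * d + b - e + 2 * c - a).

Definition qf (f : R -> R) h (a b c : R) : R := Derive f b * ((c - a) / (2 * h)).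

Lemma Ew_decomp f Dbar kappa kappa3 theta u x h : h <> 0 ->
  Ew f Dbar kappa kappa3 theta u x h =
  (f (u (x + 1 * h)) - f (u (x + -1 * h))) / (2 * h)
  - (1 - theta) / 4 * (qf f h (u (x + 0 * h)) (u (x + 1 * h)) (u (x + 2 * h))
                     - 2 * qf f h (u (x + -1 * h)) (u (x + 0 * h)) (u (x + 1 * h))
                     + qf f h (u (x + -2 * h)) (u (x + -1 * h)) (u (x + 0 * h)))
  - (Dbar (u (x + 0 * h)) (u (x + 1 * h)) *
       Wf kappa kappa3 (u (x + -2 * h)) (u (x + -1 * h)) (u (x + 0 * h))
      (u (x + 1 * h)) (u (x + 2 * h)) (u (x + 3 * h))
     - Dbar (u (x + -1 * h)) (u (x + 0 * h)) *
       Wf kappa kappa3 (u (x + -3 * h)) (u (x + -2 * h)) (u (x + -1 * h))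
      (u (x + 0 * h)) (u (x + 1 * h)) (u (x + 2 * h))) / (2 * h).
Proof.
  intros Hh. unfold Ew, Phi, Wf, qf. cbv zeta. field. auto.
Qed.


Definition P4 g a x h := Derive_n g 0 x + (a * h) * Derive_n g 1 x + (a * h) ^ 2 / 2 * Derive_n g 2 x
  + (a * h) ^ 3 / 6 * Derive_n g 3 x + (a * h) ^ 4 / 24 * Derive_n g 4 x.
Definition P3 g a x h := Derive_n g 0 x + (a * h) * Derive_n g 1 x + (a * h) ^ 2 / 2 * Derive_n g 2 x
  + (a * h) ^ 3 / 6 * Derive_n g 3 x.
Definition P1 g a x h := Derive_n g 0 x + (a * h) * Derive_n g 1 x.

Lemma T4 g a : smooth1 g -> Bnd (fun x h => g (x + a * h) - P4 g a x h) 5.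
Proof.
  intros Hg. eapply Bnd_ext; [|apply (Bnd_taylor g 4 a Hg)].
  intros x h _. unfold P4. simpl. field.
Qed.
Lemma T3 g a : smooth1 g -> Bnd (fun x h => g (x + a * h) - P3 g a x h) 4.
Proof.
  intros Hg. eapply Bnd_ext; [|apply (Bnd_taylor g 3 a Hg)].
  intros x h _. unfold P3. simpl. field.
Qed.
Lemma T1 g a : smooth1 g -> Bnd (fun x h => g (x + a * h) - P1 g a x h) 2.
Proof.
  intros Hg. eapply Bnd_ext; [|apply (Bnd_taylor g 1 a Hg)].
  intros x h _. unfold P1. simpl. field.
Qed.
Lemma T0 g a : smooth1 g -> Bnd (fun x h => g (x + a * h) - g x) 1.
Proof.
  intros Hg. eapply Bnd_ext; [|apply (Bnd_taylor g 0 a Hg)].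
  intros x h _. simpl. field.
Qed.

Lemma Bnd0_mult g1 g2 : Bnd g1 0 -> Bnd g2 0 -> Bnd (fun x h => g1 x h * g2 x h) 0.
Proof. intros. apply (Bnd_mult g1 g2 0 0); auto. Qed.
Lemma Bnd0_pow g n : Bnd g 0 -> Bnd (fun x h => g x h ^ n) 0.
Proof.
  intros H. induction n as [|n IH].
  - apply (Bnd_ext (fun x h => 1)). intros; simpl; ring. apply Bnd_const.
  - apply (Bnd_ext (fun x h => g x h * g x h ^ n)). intros; simpl; ring. apply Bnd0_mult; auto.
Qed.
Lemma Bnd0_div g c : Bnd g 0 -> Bnd (fun x h => g x h / c) 0.
Proof.
  intros H. apply (Bnd_ext (fun x h => g x h * / c)). intros; reflexivity.
  apply Bnd0_mult; auto. apply Bnd_const.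
Qed.

Ltac bnd0 :=
  first [ assumption | match goal with
  | |- Bnd (fun x h => @?A x h + @?B x h) 0 => apply (Bnd_plus A B); bnd0
  | |- Bnd (fun x h => @?A x h - @?B x h) 0 => apply (Bnd_minus A B); bnd0
  | |- Bnd (fun x h => @?A x h * @?B x h) 0 => apply (Bnd0_mult A B); bnd0
  | |- Bnd (fun x h => @?A x h / ?c) 0 => apply (Bnd0_div A c); bnd0
  | |- Bnd (fun x h => - @?A x h) 0 => apply (Bnd_opp A); bnd0
  | |- Bnd (fun x h => @?A x h ^ ?n) 0 => apply (Bnd0_pow A n); bnd0
  | |- Bnd (fun x h => h) 0 => apply Bnd_h
  | |- Bnd (fun x h => ?c) 0 => apply Bnd_const
  | |- Bnd (fun x h => Derive_n ?g ?k x) 0 => apply (Bnd_cont (Derive_n g k)); apply smooth_cont; assumption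
  | _ => idtac
  end ].

Lemma test (G u : R -> R) : smooth1 G -> smooth1 u -> Bnd (fun x h => ((2 / 3) * Derive_n G 1 x * Derive_n u 4 x + (2 / 3) * Derive_n G 2 x * Derive_n u 3 x + (1 / 9) * Derive_n G 3 x * h ^ 2 * Derive_n u 4 x + (1 / 3) * Derive_n G 3 x * Derive_n u 2 x)) 0.
Proof. intros. bnd0. Qed.


Lemma piece1 f u : smooth1 f -> smooth1 u ->
  Bnd (fun x h => (f (u (x + 1 * h)) - f (u (x + -1 * h))) / (2 * h)
     - (Derive_n (fun y => f (u y)) 1 x + h ^ 2 / 6 * Derive_n (fun y => f (u y)) 3 x)) 4.
Proof.
  intros Hf Hu. set (F := fun y => f (u y)).
  assert (HF : smooth1 F) by exact (smooth_comp f u Hf Hu).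
  apply (Bnd_ext (fun x h => / 2 * (((F (x + 1 * h) - P4 F 1 x h) - (F (x + -1 * h) - P4 F (-1) x h)) / h))).
  { intros x h Hh. unfold P4, F. simpl. field. lra. }
  apply Bnd_scal. apply Bnd_divh. apply Bnd_minus; apply T4; auto.
Qed.

Definition PX (u : R -> R) n x h := Derive_n u 1 x + Derive_n u 2 x * (n * h)
  + Derive_n u 3 x * ((3 * n ^ 2 + 1) / 6 * h ^ 2) + Derive_n u 4 x * ((n ^ 3 + n) / 6 * h ^ 3).

Lemma X_exp u n m p : smooth1 u -> p = n + 1 -> m = n - 1 ->
  Bnd (fun x h => (u (x + p * h) - u (x + m * h)) / (2 * h) - PX u n x h) 4.
Proof.
  intros Hu Hp Hm.
  apply (Bnd_ext (fun x h => / 2 * (((u (x + p * h) - P4 u p x h) - (u (x + m * h) - P4 u m x h)) / h))).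
  { intros x h Hh. unfold P4, PX. subst p m. simpl. field. lra. }
  apply Bnd_scal. apply Bnd_divh. apply Bnd_minus; apply T4; auto.
Qed.

Lemma q_exp f u n m p : smooth1 f -> smooth1 u -> p = n + 1 -> m = n - 1 ->
  Bnd (fun x h => qf f h (u (x + m * h)) (u (x + n * h)) (u (x + p * h))
     - P3 (fun y => Derive f (u y)) n x h * PX u n x h) 4.
Proof.
  intros Hf Hu Hp Hm. set (G := fun y => Derive f (u y)).
  assert (HG : smooth1 G) by exact (smooth_comp _ u (smooth_Derive f Hf) Hu).
  pose proof (X_exp u n m p Hu Hp Hm) as HX.
  set (X := fun x h => (u (x + p * h) - u (x + m * h)) / (2 * h)) in HX.
  apply (Bnd_ext (fun x h => (G (x + n * h) - P3 G n x h) * (PX u n x h + (X x h - PX u n x h))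
                         + P3 G n x h * (X x h - PX u n x h))).
  { intros x h Hh. unfold qf, X, G. ring. }
  apply (Bnd_plus _ _ 4).
  - apply (Bnd_mult _ _ 4 0). apply T3; auto.
    apply (Bnd_plus _ _ 0). unfold PX. bnd0. apply (Bnd_weak _ 0 4). lia. exact HX.
  - apply (Bnd_mult _ _ 0 4). unfold P3. bnd0. exact HX.
Qed.

Lemma piece2 f u : smooth1 f -> smooth1 u ->
  let G := fun y => Derive f (u y) in
  Bnd (fun x h => (qf f h (u (x + 0 * h)) (u (x + 1 * h)) (u (x + 2 * h))
                     - 2 * qf f h (u (x + -1 * h)) (u (x + 0 * h)) (u (x + 1 * h))
                     + qf f h (u (x + -2 * h)) (u (x + -1 * h)) (u (x + 0 * h)))
     - h ^ 2 * (Derive_n G 2 x * Derive_n u 1 x + 2 * Derive_n G 1 x * Derive_n u 2 x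
                 + Derive_n G 0 x * Derive_n u 3 x)) 4.
Proof.
  intros Hf Hu G.
  assert (HG : smooth1 G) by exact (smooth_comp _ u (smooth_Derive f Hf) Hu).
  pose proof (q_exp f u 1 0 2 Hf Hu ltac:(ring) ltac:(ring)) as H1.
  pose proof (q_exp f u 0 (-1) 1 Hf Hu ltac:(ring) ltac:(ring)) as H0.
  pose proof (q_exp f u (-1) (-2) 0 Hf Hu ltac:(ring) ltac:(ring)) as Hm.
  fold G in H1, H0, Hm.
  apply (Bnd_ext (fun x h =>
     (qf f h (u (x + 0 * h)) (u (x + 1 * h)) (u (x + 2 * h)) - P3 G 1 x h * PX u 1 x h)
     - 2 * (qf f h (u (x + -1 * h)) (u (x + 0 * h)) (u (x + 1 * h)) - P3 G 0 x h * PX u 0 x h)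
     + (qf f h (u (x + -2 * h)) (u (x + -1 * h)) (u (x + 0 * h)) - P3 G (-1) x h * PX u (-1) x h)
     + h ^ 4 * ((2 / 3) * Derive_n G 1 x * Derive_n u 4 x + (2 / 3) * Derive_n G 2 x * Derive_n u 3 x
        + (1 / 9) * Derive_n G 3 x * h ^ 2 * Derive_n u 4 x + (1 / 3) * Derive_n G 3 x * Derive_n u 2 x))).
  { intros x h Hh. unfold P3, PX. simpl. field. }
  apply (Bnd_plus _ _ 4). apply (Bnd_plus _ _ 4). apply (Bnd_minus _ _ 4).
  exact H1. apply Bnd_scal. exact H0. exact Hm.
  apply (Bnd_mult _ _ 4 0). apply Bnd_hpow. bnd0.
Qed.


Lemma Bnd_divc g c k : Bnd g k -> Bnd (fun x h => g x h / c) k.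
Proof.
  intros H. apply (Bnd_ext (fun x h => / c * g x h)). intros; unfold Rdiv; ring.
  apply Bnd_scal; auto.
Qed.

Ltac bndk k :=
  first
  [ assumption
  | apply T4; assumption
  | match goal with
    | |- Bnd (fun x h => @?A x h + @?B x h) _ => apply (Bnd_plus A B k); bndk k
    | |- Bnd (fun x h => @?A x h - @?B x h) _ => apply (Bnd_minus A B k); bndk k
    | |- Bnd (fun x h => ?c * @?A x h) _ => apply (Bnd_scal c A k); bndk k
    | |- Bnd (fun x h => @?A x h / ?c) _ => apply (Bnd_divc A c k); bndk k
    | |- Bnd (fun x h => - @?A x h) _ => apply (Bnd_opp A k); bndk k
    end ].

Definition cW kappa kappa3 := - (1 - kappa + kappa3) / 4.

Lemma W_exp1 u kappa kappa3 : smooth1 u ->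
  Bnd (fun x h => Wf kappa kappa3 (u (x + -2 * h)) (u (x + -1 * h)) (u (x + 0 * h))
      (u (x + 1 * h)) (u (x + 2 * h)) (u (x + 3 * h))
     - cW kappa kappa3 * (h ^ 3 * Derive_n u 3 x + h ^ 4 * Derive_n u 4 x / 2)) 5.
Proof.
  intros Hu.
  apply (Bnd_ext (fun x h => Wf kappa kappa3
     (u (x + -2 * h) - P4 u (-2) x h) (u (x + -1 * h) - P4 u (-1) x h) (u (x + 0 * h) - P4 u 0 x h)
     (u (x + 1 * h) - P4 u 1 x h) (u (x + 2 * h) - P4 u 2 x h) (u (x + 3 * h) - P4 u 3 x h))).
  { intros x h _. unfold Wf, P4, cW. field. }
  unfold Wf. bndk 5%nat.
Qed.

Lemma W_exp0 u kappa kappa3 : smooth1 u ->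
  Bnd (fun x h => Wf kappa kappa3 (u (x + -3 * h)) (u (x + -2 * h)) (u (x + -1 * h))
      (u (x + 0 * h)) (u (x + 1 * h)) (u (x + 2 * h))
     - cW kappa kappa3 * (h ^ 3 * Derive_n u 3 x - h ^ 4 * Derive_n u 4 x / 2)) 5.
Proof.
  intros Hu.
  apply (Bnd_ext (fun x h => Wf kappa kappa3
     (u (x + -3 * h) - P4 u (-3) x h) (u (x + -2 * h) - P4 u (-2) x h) (u (x + -1 * h) - P4 u (-1) x h)
     (u (x + 0 * h) - P4 u 0 x h) (u (x + 1 * h) - P4 u 1 x h) (u (x + 2 * h) - P4 u 2 x h))).
  { intros x h _. unfold Wf, P4, cW. field. }
  unfold Wf. bndk 5%nat.
Qed.

Lemma Bnd_dom g1 g2 k :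
  (forall M, 0 < M -> exists K delta, 0 < delta /\ forall x h, Rabs x <= M -> 0 < h < delta ->
     Rabs (g1 x h) <= K * Rabs (g2 x h)) -> Bnd g2 k -> Bnd g1 k.
Proof.
  intros Hd H M HM. destruct (Hd M HM) as [K [d1 [Hd1 HK]]].
  destruct (H M HM) as [C [d2 [Hd2 HC]]].
  exists (Rabs K * C), (Rmin d1 d2). split. apply Rmin_pos; auto.
  intros x h Hx Hh. pose proof (Rmin_l d1 d2). pose proof (Rmin_r d1 d2).
  specialize (HK x h Hx ltac:(lra)). specialize (HC x h Hx ltac:(lra)).
  eapply Rle_trans. apply HK. eapply Rle_trans.
  apply Rmult_le_compat_r. apply Rabs_pos. apply RRle_abs.
  rewrite Rmult_assoc. apply Rmult_le_compat_l. apply Rabs_pos. auto.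
Qed.

Lemma u_bound u : smooth1 u -> forall L, exists B, 0 <= B /\ forall y, Rabs y <= L -> Rabs (u y) <= B.
Proof.
  intros Hu L. apply cont_bound. intro x. apply (smooth_cont u 0 Hu x).
Qed.

Lemma Bnd_diag pd (Hpd : pd_ok pd) u m n : smooth1 u -> Bnd (fun x h => pd m n (u x) (u x)) 0.
Proof.
  intros Hu. apply (Bnd_fx (fun y => pd m n (u y) (u y))). intros L.
  destruct (u_bound u Hu L) as [B [HB0 HB]].
  destruct (bound_2d (pd m n) (fun x y => proj2 (proj2 (Hpd m n x y))) (B + 1) ltac:(lra)) as [K HK].
  exists K. intros y Hy. apply HK; pose proof (HB y Hy); lra.
Qed.

Lemma A_exp pd (Hpd : pd_ok pd) u a : smooth1 u ->
  Bnd (fun x h => pd 0%nat 0%nat (u x) (u (x + a * h)) - pd 0%nat 0%nat (u x) (u x)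
     - pd 0%nat 1%nat (u x) (u x) * (a * h * Derive_n u 1 x)) 2.
Proof.
  intros Hu.
  apply (Bnd_ext (fun x h =>
     (pd 0%nat 0%nat (u x) (u (x + a * h)) - pd 0%nat 0%nat (u x) (u x)
      - pd 0%nat 1%nat (u x) (u x) * (u (x + a * h) - u x))
     + pd 0%nat 1%nat (u x) (u x) * (u (x + a * h) - P1 u a x h))).
  { intros x h _. unfold P1. simpl. ring. }
  apply (Bnd_plus _ _ 2).
  - apply (Bnd_dom _ (fun x h => (u (x + a * h) - u x) * (u (x + a * h) - u x))).
    + intros M HM.
      destruct (u_bound u Hu (M + 1)) as [B [HB0 HB]].
      destruct (bound_2d (pd 0%nat 2%nat) (fun x y => proj2 (proj2 (Hpd 0%nat 2%nat x y))) (3 * B + 1) ltac:(lra)) as [K HK].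
      exists K, (/ (Rabs a + 1)). split.
      { apply Rinv_0_lt_compat. pose proof (Rabs_pos a). lra. }
      intros x h Hx Hh.
      assert (Hah : Rabs (x + a * h) <= M + 1).
      { assert (Rabs (a * h) <= 1).
        { rewrite Rabs_mult, (Rabs_right h) by lra. pose proof (Rabs_pos a).
          destruct Hh as [Hh1 Hh2].
          apply Rmult_lt_compat_l with (r := Rabs a + 1) in Hh2; [|lra].
          rewrite Rinv_r in Hh2 by lra. nra. }
        pose proof (Rabs_triang x (a * h)). lra. }
      pose proof (HB x ltac:(lra)) as B1. pose proof (HB _ Hah) as B2.
      cbv beta. rewrite (Rabs_right ((u (x + a * h) - u x) * (u (x + a * h) - u x))).
      2:{ apply Rle_ge. apply Rle_0_sqr. }
      replace ((u (x + a * h) - u x) * (u (x + a * h) - u x)) with ((u (x + a * h) - u x) ^ 2) by ring.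
      apply quad2; auto. intros t Ht. apply HK.
      * lra.
      * pose proof (Rabs_triang_inv t (u x)). pose proof (Rabs_triang (u (x + a * h)) (- u x)).
        rewrite Rabs_Ropp in *. unfold Rminus in *. lra.
    + apply (Bnd_mult _ _ 1 1); apply T0; auto.
  - apply (Bnd_mult _ _ 0 2). apply Bnd_diag; auto. apply T1; auto.
Qed.

Lemma piece3 pd (Hpd : pd_ok pd) u kappa kappa3 : smooth1 u ->
  (forall v w, pd 0%nat 0%nat v w = pd 0%nat 0%nat w v) ->
  Bnd (fun x h =>
    (pd 0%nat 0%nat (u (x + 0 * h)) (u (x + 1 * h)) *
       Wf kappa kappa3 (u (x + -2 * h)) (u (x + -1 * h)) (u (x + 0 * h))
      (u (x + 1 * h)) (u (x + 2 * h)) (u (x + 3 * h))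
     - pd 0%nat 0%nat (u (x + -1 * h)) (u (x + 0 * h)) *
       Wf kappa kappa3 (u (x + -3 * h)) (u (x + -2 * h)) (u (x + -1 * h))
      (u (x + 0 * h)) (u (x + 1 * h)) (u (x + 2 * h))) / (2 * h)
    - cW kappa kappa3 / 2 * h ^ 3 * (pd 0%nat 0%nat (u x) (u x) * Derive_n u 4 x
        + 2 * pd 0%nat 1%nat (u x) (u x) * Derive_n u 1 x * Derive_n u 3 x)) 4.
Proof.
  intros Hu Hsym.
  set (W1 := fun x h => Wf kappa kappa3 (u (x + -2 * h)) (u (x + -1 * h)) (u (x + 0 * h))
      (u (x + 1 * h)) (u (x + 2 * h)) (u (x + 3 * h))).
  set (W0 := fun x h => Wf kappa kappa3 (u (x + -3 * h)) (u (x + -2 * h)) (u (x + -1 * h))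
      (u (x + 0 * h)) (u (x + 1 * h)) (u (x + 2 * h))).
  set (PW1 := fun x h => cW kappa kappa3 * (h ^ 3 * Derive_n u 3 x + h ^ 4 * Derive_n u 4 x / 2)).
  set (PW0 := fun x h => cW kappa kappa3 * (h ^ 3 * Derive_n u 3 x - h ^ 4 * Derive_n u 4 x / 2)).
  set (EA := fun x h => pd 0%nat 0%nat (u x) (u (x + 1 * h)) - pd 0%nat 0%nat (u x) (u x)
     - pd 0%nat 1%nat (u x) (u x) * (1 * h * Derive_n u 1 x)).
  set (EB := fun x h => pd 0%nat 0%nat (u x) (u (x + -1 * h)) - pd 0%nat 0%nat (u x) (u x)
     - pd 0%nat 1%nat (u x) (u x) * (-1 * h * Derive_n u 1 x)).
  set (PA := fun x h => pd 0%nat 0%nat (u x) (u x) + pd 0%nat 1%nat (u x) (u x) * (1 * h * Derive_n u 1 x)).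
  set (PB := fun x h => pd 0%nat 0%nat (u x) (u x) + pd 0%nat 1%nat (u x) (u x) * (-1 * h * Derive_n u 1 x)).
  assert (HW1 : Bnd (fun x h => W1 x h - PW1 x h) 5) by (apply W_exp1; auto).
  assert (HW0 : Bnd (fun x h => W0 x h - PW0 x h) 5) by (apply W_exp0; auto).
  assert (HEA : Bnd EA 2) by (apply A_exp; auto).
  assert (HEB : Bnd EB 2) by (apply A_exp; auto).
  assert (HP1 : Bnd (fun x h => pd 0%nat 1%nat (u x) (u x)) 0) by (apply Bnd_diag; auto).
  assert (HP0 : Bnd (fun x h => pd 0%nat 0%nat (u x) (u x)) 0) by (apply Bnd_diag; auto).
  assert (HW1' : Bnd W1 3).
  { apply (Bnd_ext (fun x h => (W1 x h - PW1 x h) + h ^ 3 * (cW kappa kappa3 * (Derive_n u 3 x + h * Derive_n u 4 x / 2)))).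
    { intros x h _. cbv beta. unfold PW1. field. }
    apply (Bnd_plus _ _ 3). apply (Bnd_weak _ 3 5). lia. auto.
    apply (Bnd_mult _ _ 3 0). apply Bnd_hpow. bnd0. }
  assert (HW0' : Bnd W0 3).
  { apply (Bnd_ext (fun x h => (W0 x h - PW0 x h) + h ^ 3 * (cW kappa kappa3 * (Derive_n u 3 x - h * Derive_n u 4 x / 2)))).
    { intros x h _. cbv beta. unfold PW0. field. }
    apply (Bnd_plus _ _ 3). apply (Bnd_weak _ 3 5). lia. auto.
    apply (Bnd_mult _ _ 3 0). apply Bnd_hpow. bnd0. }
  apply (Bnd_ext (fun x h => / 2 * ((EA x h * W1 x h + PA x h * (W1 x h - PW1 x h)
      - EB x h * W0 x h - PB x h * (W0 x h - PW0 x h)) / h))).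
  { intros x h Hh. unfold EA, EB, PA, PB, W1, W0, PW1, PW0.
    replace (x + 0 * h) with x by ring.
    rewrite (Hsym (u (x + -1 * h)) (u x)). unfold cW. field. lra. }
  apply Bnd_scal. apply Bnd_divh.
  apply (Bnd_minus (fun x h => EA x h * W1 x h + PA x h * (W1 x h - PW1 x h) - EB x h * W0 x h)
     (fun x h => PB x h * (W0 x h - PW0 x h)) 5).
  apply (Bnd_minus (fun x h => EA x h * W1 x h + PA x h * (W1 x h - PW1 x h))
     (fun x h => EB x h * W0 x h) 5).
  apply (Bnd_plus (fun x h => EA x h * W1 x h) (fun x h => PA x h * (W1 x h - PW1 x h)) 5).
  - apply (Bnd_mult EA W1 2 3); auto.
  - apply (Bnd_mult PA (fun x h => W1 x h - PW1 x h) 0 5); auto. unfold PA. bnd0.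
  - apply (Bnd_mult EB W0 2 3); auto.
  - apply (Bnd_mult PB (fun x h => W0 x h - PW0 x h) 0 5); auto. unfold PB. bnd0.
Qed.


Lemma leibniz3 f u x : smooth1 f -> smooth1 u ->
  Derive_n (fun y => f (u y)) 3 x =
  Derive_n (fun y => Derive f (u y)) 2 x * Derive_n u 1 x
  + 2 * Derive_n (fun y => Derive f (u y)) 1 x * Derive_n u 2 x
  + Derive_n (fun y => Derive f (u y)) 0 x * Derive_n u 3 x.
Proof.
  intros Hf Hu. set (G := fun y => Derive f (u y)).
  assert (HG : smooth1 G) by exact (smooth_comp _ u (smooth_Derive f Hf) Hu).
  assert (HdF : Derive (fun y => f (u y)) = fun y => G y * Derive u y).
  { apply functional_extensionality; intro y. rewrite (Derive_comp f u y).
    unfold G; ring. apply (Hf 0%nat). apply (Hu 0%nat). }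
  rewrite Dn_S, HdF.
  set (u1 := Derive u).
  assert (Hu1 : smooth1 u1) by (apply smooth_Derive; auto).
  assert (HdGu : Derive (fun y => G y * u1 y) = fun y => Derive G y * u1 y + G y * Derive u1 y).
  { apply functional_extensionality; intro y. apply Derive_mult. apply (HG 0%nat). apply (Hu1 0%nat). }
  rewrite Dn_S, HdGu.
  change (Derive_n (fun y => Derive G y * u1 y + G y * Derive u1 y) 1 x)
    with (Derive (fun y => Derive G y * u1 y + G y * Derive u1 y) x).
  assert (E1 : Derive_n G 2 x = Derive (Derive G) x) by reflexivity.
  assert (E2 : Derive_n G 1 x = Derive G x) by reflexivity.
  assert (E3 : Derive_n G 0 x = G x) by reflexivity.
  assert (E4 : Derive_n u 1 x = u1 x) by reflexivity.
  assert (E5 : Derive_n u 2 x = Derive u1 x) by reflexivity.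
  assert (E6 : Derive_n u 3 x = Derive (Derive u1) x) by reflexivity.
  rewrite E1, E2, E3, E4, E5, E6.
  rewrite (Derive_plus (fun y => Derive G y * u1 y) (fun y => G y * Derive u1 y)).
  rewrite (Derive_mult (Derive G) u1), (Derive_mult G (Derive u1)).
  - ring.
  - apply (HG 0%nat).
  - apply (Hu1 1%nat).
  - apply (smooth_Derive _ HG 0%nat).
  - apply (Hu1 0%nat).
  - apply (ex_derive_mult (Derive G) u1 x). apply (smooth_Derive _ HG 0%nat). apply (Hu1 0%nat).
  - apply (ex_derive_mult G (Derive u1) x). apply (HG 0%nat). apply (Hu1 1%nat).
Qed.

Lemma main_gen (u f D : R -> R) (Dbar : R -> R -> R) (kappa kappa3 theta : R) :
  smooth1 u -> smooth1 f -> smooth1 D -> smooth2 Dbar ->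
  (forall v w, Dbar v w = Dbar w v) -> (forall v, Dbar v v = D v) ->
  Bnd (fun x h => Ew f Dbar kappa kappa3 theta u x h
     - (Derive (fun y => f (u y)) x
        + (3 * theta - 1) / 12 * Derive_n (fun y => f (u y)) 3 x * h ^ 2
        + (1 - kappa + kappa3) / 8 *
            (Derive (fun y => D (u y)) x * Derive_n u 3 x + D (u x) * Derive_n u 4 x) * h ^ 3)) 4.
Proof.
  intros Hu Hf HD Hb Hsym HDD.
  destruct Hb as [pd [H00 Hpd']].
  assert (Hpd : pd_ok pd) by exact Hpd'.
  pose proof (D_deriv pd Hpd Dbar D H00 Hsym HDD) as HDv.
  subst Dbar.
  pose proof (piece1 f u Hf Hu) as H1.
  pose proof (piece2 f u Hf Hu) as H2. cbv zeta in H2.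
  pose proof (piece3 pd Hpd u kappa kappa3 Hu Hsym) as H3.
  pose proof (Bnd_scal ((1 - theta) / 4) _ _ H2) as H2'. cbv beta in H2'.
  eapply Bnd_ext; [| apply (Bnd_minus _ _ 4 (Bnd_minus _ _ 4 H1 H2') H3)].
  intros x h Hh. cbv beta.
  rewrite Ew_decomp by lra.
  rewrite (leibniz3 f u x Hf Hu).
  rewrite (Derive_comp D u x) by (apply (HD 0%nat) || apply (Hu 0%nat)).
  rewrite HDv. rewrite <- (HDD (u x)).
  change (Derive (fun y => f (u y)) x) with (Derive_n (fun y => f (u y)) 1 x).
  change (Derive u x) with (Derive_n u 1 x).
  unfold cW. field. lra.
Qed.


Theorem mainTheorem5 :
  forall (u f D : R -> R) (Dbar : R -> R -> R) (kappa kappa3 theta : R),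
    smooth1 u -> smooth1 f -> smooth1 D -> smooth2 Dbar ->
    (forall v w, Dbar v w = Dbar w v) ->
    (forall v, Dbar v v = D v) ->
    (* part 1: kappa3 = 0 *)
    (kappa3 = 0 ->
     forall M : R, 0 < M ->
     exists C delta : R, 0 < delta /\
       forall (h : R) (j : Z), 0 < h < delta -> Rabs (IZR j * h) <= M ->
         let x := IZR j * h in
         Rabs (cfsr_E f D Dbar kappa kappa3 theta u h j
               - (Derive (fun y => f (u y)) x
                  + (3 * theta - 1) / 12 * Derive_n (fun y => f (u y)) 3 x * h ^ 2
                  - (kappa - 1) / 8 *
                      (Derive (fun y => D (u y)) x * Derive_n u 3 x
                       + D (u x) * Derive_n u 4 x) * h ^ 3))
         <= C * h ^ 4) /\
    (* part 2: theta = 1/3 and kappa3 = kappa - 1 *)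
    (theta = 1 / 3 -> kappa3 = kappa - 1 ->
     forall M : R, 0 < M ->
     exists C delta : R, 0 < delta /\
       forall (h : R) (j : Z), 0 < h < delta -> Rabs (IZR j * h) <= M ->
         let x := IZR j * h in
         Rabs (cfsr_E f D Dbar kappa kappa3 theta u h j
               - Derive (fun y => f (u y)) x)
         <= C * h ^ 4).
Proof.
  intros u f D Dbar kappa kappa3 theta Hu Hf HD Hb Hsym HDD.
  pose proof (main_gen u f D Dbar kappa kappa3 theta Hu Hf HD Hb Hsym HDD) as Hm.
  split.
  - intros Hk3 M HM. destruct (Hm M HM) as [C [d [Hd HC]]].
    exists C, d. split; auto. intros h j Hh Hx. cbv zeta.
    rewrite cfsr_E_Ew. specialize (HC (IZR j * h) h Hx Hh). cbv beta in HC.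
    subst kappa3.
    replace ((1 - kappa + 0) / 8) with (- ((kappa - 1) / 8)) in HC by field.
    eapply Rle_trans; [|exact HC]. right. f_equal. ring.
  - intros Ht Hk3 M HM. destruct (Hm M HM) as [C [d [Hd HC]]].
    exists C, d. split; auto. intros h j Hh Hx. cbv zeta.
    rewrite cfsr_E_Ew. specialize (HC (IZR j * h) h Hx Hh). cbv beta in HC.
    subst kappa3 theta.
    eapply Rle_trans; [|exact HC]. right. f_equal. field.
Qed.
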